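(* If $A\subset\mathbb{Z}^n$ is a generic $\Lambda$-finite set for some antichain lattice $\Lambda\subset\mathbb{Z}^n$, then the Scarf complex $N(A)$ is isomorphic to the hull complex $\mathrm{hull}(A)$ (via $\sigma\mapsto E_t(\sigma)$ for $t$ sufficiently large).
   Context: Notation: $\le$, $\ll$, $\vee$ componentwise on $\mathbb{Z}^n$; an antichain lattice is a subgroup of $\mathbb{Z}^n$ whose distinct elements are pairwise incomparable. $T_\eta=\eta-\mathbb{N}^n$, $T^o_\eta=\{\beta:\beta\ll\eta\}$; the $X$-face ($\emptyset\neq X\subseteq[n]$) of $T_\eta$ is $\{\alpha\in T_\eta:\alpha_i=\eta_i\ \forall i\in X\}$. $A$ is generic if whenever $T^o_\eta\cap A=\emptyset$, each face of $T_\eta$ contains at most one point of $A$. $A$ is $\Lambda$-finite if $A=A+\Lambda$ and $A=A_0+\Lambda$ for some finite $A_0$. $N(A)$ is the simplicial complex of strongly neighborly subsets of $A$: finite nonempty $B\subseteq A$ such that $B'\subseteq A$, $\vee B'=\vee B$ imply $B'=B$. For $t>1$, $E_t(\alpha)=(t^{\alpha_1},\dots,t^{\alpha_n})$, $\mathcal{P}_t(A)=\mathbb{R}^n_{\ge0}+\mathrm{conv}(E_t(A))$, $\mathrm{hull}_t(A)$ is the collection of $F\subseteq A$ such that $\mathrm{conv}(E_t(F))$ is a face of $\mathcal{P}_t(A)$, and $\mathrm{hull}(A)$ is $\mathrm{hull}_t(A)$ for $t$ large enough that it no longer depends on $t$. *)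

(* Defs.v *)
From HB Require Import structures.
From mathcomp Require Import all_boot all_order all_algebra.
From mathcomp Require Import finmap.
From mathcomp Require Import reals.
Set Implicit Arguments. Unset Strict Implicit. Unset Printing Implicit Defensive.
Import Order.TTheory GRing.Theory Num.Theory.
Local Open Scope ring_scope.


Notation Zn n := {ffun 'I_n -> int}.
Notation Rn R n := {ffun 'I_n -> R}.

Definition leZ n (a b : Zn n) : Prop := forall i, a i <= b i.
Definition llZ n (a b : Zn n) : Prop := forall i, a i < b i.

Definition vee n (B : {fset Zn n}) : Zn n :=
  [ffun i => foldr (fun (b : Zn n) (m : int) => Num.max (b i) m)
                   ((head ([ffun => 0] : Zn n) (enum_fset B)) i) (enum_fset B)].

Definition subgroupZ n (L : Zn n -> Prop) : Prop :=
  L 0 /\ (forall x y, L x -> L y -> L (x - y)).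
Definition antichain_lattice n (L : Zn n -> Prop) : Prop :=
  subgroupZ L /\
  (forall x y, L x -> L y -> x <> y -> ~ leZ x y /\ ~ leZ y x).

Definition Lambda_finite n (L A : Zn n -> Prop) : Prop :=
  (forall x, A x <-> exists a l, A a /\ L l /\ x = a + l) /\
  (exists A0 : {fset Zn n},
      forall x, A x <-> exists a l, a \in A0 /\ L l /\ x = a + l).

Definition Tcone n (eta : Zn n) (a : Zn n) : Prop := leZ a eta.
Definition Tcone_open n (eta : Zn n) (b : Zn n) : Prop := llZ b eta.
Definition Tface n (eta : Zn n) (X : {set 'I_n}) (a : Zn n) : Prop :=
  Tcone eta a /\ (forall i, i \in X -> a i = eta i).

Definition generic n (A : Zn n -> Prop) : Prop :=
  forall eta : Zn n,
    (forall b, Tcone_open eta b -> ~ A b) ->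
    forall X : {set 'I_n}, X != set0 ->
      forall a b, A a -> A b -> Tface eta X a -> Tface eta X b -> a = b.

(* Scarf complex N(A): strongly neighborly finite nonempty subsets of A *)
Definition in_scarf n (A : Zn n -> Prop) (B : {fset Zn n}) : Prop :=
  B != fset0 /\ (forall b, b \in B -> A b) /\
  (forall B' : {fset Zn n}, B' != fset0 -> (forall b, b \in B' -> A b) ->
      vee B' = vee B -> B' = B).

Definition Et (R : realType) n (t : R) (a : Zn n) : Rn R n :=
  [ffun i => t ^ (a i)].

Definition convEt (R : realType) n (t : R) (F : {fset Zn n}) (x : Rn R n) : Prop :=
  exists w : Zn n -> R,
    (forall a, a \in F -> 0 <= w a) /\
    \sum_(a <- enum_fset F) w a = 1 /\
    (forall i, x i = \sum_(a <- enum_fset F) w a * Et t a i).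

(* P_t(A) = R^n_{>=0} + conv(E_t(A)); the convex hull of an arbitrary set
   is the union of the convex hulls of its finite subsets. *)
Definition Pt (R : realType) n (t : R) (A : Zn n -> Prop) (x : Rn R n) : Prop :=
  exists (F : {fset Zn n}) (y : Rn R n),
    (forall a, a \in F -> A a) /\ convEt t F y /\ (forall i, y i <= x i).

Definition is_face (R : realType) n (C G : Rn R n -> Prop) : Prop :=
  (forall x, G x -> C x) /\
  (forall x y (s : R), G x -> G y -> 0 <= s <= 1 ->
      G [ffun i => (1 - s) * x i + s * y i]) /\
  (forall x y (s : R), C x -> C y -> 0 < s < 1 ->
      G [ffun i => (1 - s) * x i + s * y i] -> G x /\ G y).

Definition in_hull (R : realType) n (t : R) (A : Zn n -> Prop) (F : {fset Zn n}) : Prop :=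
  F != fset0 /\ (forall a, a \in F -> A a) /\ is_face (Pt t A) (convEt t F).

(* Main.v *)
Require Import Defs.
From HB Require Import structures.
From mathcomp Require Import all_boot all_order all_algebra.
From mathcomp Require Import finmap.
From mathcomp Require Import reals.
From mathcomp Require Import zify.
From mathcomp Require Import ring lra.
Import Order.TTheory GRing.Theory Num.Theory.
Local Open Scope ring_scope.

Set Implicit Arguments. Unset Strict Implicit. Unset Printing Implicit Defensive.


Section Vee.
Variable n : nat.

Lemma foldr_max_ge (s : seq (Zn n)) (v : int) i :
  v <= foldr (fun (b : Zn n) (m : int) => Num.max (b i) m) v s /\
  (forall b, b \in s -> b i <= foldr (fun (b : Zn n) (m : int) => Num.max (b i) m) v s).
Proof.
elim: s => [|c s [IH1 IH2]] /=; first by split.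
split; first by rewrite le_max IH1 orbT.
move=> b; rewrite in_cons => /orP [/eqP -> | bs]; first by rewrite le_max lexx.
by rewrite le_max IH2 ?orbT.
Qed.

Lemma foldr_max_att (s : seq (Zn n)) (v : int) i :
  foldr (fun (b : Zn n) (m : int) => Num.max (b i) m) v s = v \/
  exists2 b, b \in s & foldr (fun (b : Zn n) (m : int) => Num.max (b i) m) v s = b i.
Proof.
elim: s => [|c s IH] /=; first by left.
have [h|h] := leP (c i) (foldr (fun (b : Zn n) (m : int) => Num.max (b i) m) v s).
- case: IH => [->|[b bs ->]]; first by left.
  by right; exists b => //; rewrite in_cons bs orbT.
- by right; exists c; rewrite ?mem_head.
Qed.

Lemma vee_ge (B : {fset Zn n}) b : b \in B -> leZ b (vee B).
Proof. by move=> bB i; rewrite /vee ffunE; case: (foldr_max_ge (enum_fset B) ((head ([ffun => 0] : Zn n) (enum_fset B)) i) i) => _ ->. Qed.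

Lemma vee_att (B : {fset Zn n}) i : B != fset0 -> exists2 b, b \in B & b i = vee B i.
Proof.
move=> B0; rewrite /vee ffunE.
have hB : head ([ffun => 0] : Zn n) (enum_fset B) \in B.
  case/fset0Pn: B0 => x xB.
  move: xB; rewrite -[x \in B]/(x \in enum_fset B).
  by case E: (enum_fset B) => [|c s] //= _; rewrite -[c \in B]/(c \in enum_fset B) E mem_head.
case: (foldr_max_att (enum_fset B) ((head ([ffun => 0] : Zn n) (enum_fset B)) i) i) => [->|[b bs ->]]; first by exists (head ([ffun => 0] : Zn n) (enum_fset B)).
by exists b.
Qed.

Lemma vee_char (B : {fset Zn n}) (eta : Zn n) : B != fset0 ->
  (forall b, b \in B -> leZ b eta) -> (forall i, exists2 b, b \in B & b i = eta i) ->
  vee B = eta.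
Proof.
move=> B0 h1 h2; apply/ffunP => i; apply/le_anti/andP; split.
- by have [b bB <-] := vee_att i B0; exact: h1.
- by have [b bB <-] := h2 i; exact: vee_ge.
Qed.
End Vee.


Section Expose.
Variables (R : realType) (n : nat) (t : R) (A : Zn n -> Prop) (F : {fset Zn n}) (w : 'I_n -> R).
Hypotheses (wpos : forall l, 0 < w l) (FA : forall a, a \in F -> A a)
  (VF : forall a, a \in F -> \sum_l w l * Et t a l = 1)
  (VnF : forall b, A b -> b \notin F -> 1 < \sum_l w l * Et t b l).

Let V a := \sum_l w l * Et t a l.

Lemma VA a : A a -> 1 <= V a.
Proof. by move=> Aa; case: (boolP (a \in F)) => aF; [rewrite /V VF | apply/ltW/VnF]. Qed.

Lemma sum_conv (G : {fset Zn n}) (mu : Zn n -> R) (y : Rn R n) :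
  (forall i, y i = \sum_(a <- enum_fset G) mu a * Et t a i) ->
  \sum_l w l * y l = \sum_(a <- enum_fset G) mu a * V a.
Proof.
move=> hy; under eq_bigr => l _ do rewrite hy mulr_sumr.
rewrite exchange_big /=; apply: eq_bigr => a _.
by rewrite /V mulr_sumr; apply: eq_bigr => l _; rewrite mulrCA.
Qed.

Lemma conv_V1 x : convEt t F x -> \sum_l w l * x l = 1.
Proof.
case=> mu [mu0 [mu1 hx]]; rewrite (sum_conv hx) -mu1.
by rewrite big_seq_cond [RHS]big_seq_cond; apply: eq_bigr => a /andP [aF _]; rewrite /V VF // mulr1.
Qed.

Lemma P_V1 x : Pt t A x -> 1 <= \sum_l w l * x l.
Proof.
case=> G [y [GA [[mu [mu0 [mu1 hy]]] yx]]].
have le1 : \sum_l w l * y l <= \sum_l w l * x l.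
  by apply: ler_sum => l _; rewrite ler_wpM2l // ltW.
apply: le_trans le1.
rewrite (sum_conv hy) -mu1 big_seq_cond [X in _ <= X]big_seq_cond.
by apply: ler_sum => a /andP [aG _]; rewrite -[X in X <= _]mulr1 ler_wpM2l ?mu0 ?VA //; apply: GA.
Qed.

Lemma P_V1_conv x : Pt t A x -> \sum_l w l * x l = 1 -> convEt t F x.
Proof.
case=> G [y [GA [[mu [mu0 [mu1 hy]]] yx]]] hx1.
have hy1 : \sum_l w l * y l = \sum_(a <- enum_fset G) mu a * V a := sum_conv hy.
have ge1 : 1 <= \sum_(a <- enum_fset G) mu a * V a.
  rewrite -mu1 big_seq_cond [X in _ <= X]big_seq_cond.
  by apply: ler_sum => a /andP [aG _]; rewrite -[X in X <= _]mulr1 ler_wpM2l ?mu0 ?VA //; apply: GA.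
have le1 : \sum_l w l * y l <= \sum_l w l * x l.
  by apply: ler_sum => l _; rewrite ler_wpM2l // ltW.
have yV1 : \sum_l w l * y l = 1 by lra.
have xy : forall l, x l = y l.
  have h0 : \sum_l w l * (x l - y l) = 0.
    rewrite (eq_bigr (fun l => w l * x l - w l * y l)) => [|l _]; last by rewrite mulrBr.
    rewrite sumrB; lra.
  move=> l; apply/eqP; rewrite -subr_eq0.
  have := psumr_eq0P (P := xpredT) (F := fun l => w l * (x l - y l)) _ h0 (i := l) isT.
  move=> /(_ (fun l _ => mulr_ge0 (ltW (wpos l)) _)).
  have hh : forall l, 0 <= x l - y l by move=> l'; rewrite subr_ge0.
  move=> /(_ hh) /eqP; rewrite mulf_eq0 => /orP [|//].
  by rewrite gt_eqF.
have mu0F : forall a, a \in enum_fset G -> a \notin F -> mu a = 0.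
  have h0 : \sum_(a <- enum_fset G | a \in enum_fset G) (mu a * (V a - 1)) == 0.
    rewrite -big_seq (eq_bigr (fun a => mu a * V a - mu a)) => [|a _]; last by rewrite mulrBr mulr1.
    by rewrite sumrB mu1 -hy1 yV1 subrr.
  rewrite psumr_eq0 in h0; last first.
    by move=> a aG; rewrite mulr_ge0 ?mu0 // subr_ge0 VA //; apply: GA.
  move=> a aG aF; move/allP: h0 => /(_ a aG); rewrite aG /= mulf_eq0 => /orP [/eqP //|].
  have := VnF (GA a aG) aF; rewrite -/(V a) subr_eq0 => h /eqP h'; by move: h; rewrite h' ltxx.
pose mu' a := if a \in G then mu a else 0.
have key : forall g : Zn n -> R, \sum_(a <- enum_fset F) mu' a * g a = \sum_(a <- enum_fset G) mu a * g a.
  move=> g.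
  have e1 : \sum_(a <- enum_fset G) mu a * g a = \sum_(a <- enum_fset G) mu' a * g a.
    by rewrite big_seq [RHS]big_seq; apply: eq_bigr => b bG; rewrite /mu' bG.
  rewrite e1 (big_fset_incl _ (fsubsetUl F G)) ?(big_fset_incl _ (fsubsetUr F G)) //.
  - by move=> a _ aG; rewrite /mu' (negbTE aG) mul0r.
  - move=> a; rewrite in_fsetU => /orP [->//|aG] aF.
    by rewrite /mu' aG mu0F ?mul0r.
exists mu'; split; [|split].
- by move=> a _; rewrite /mu'; case: ifP => // aG; apply: mu0.
- have := key (fun _ => 1); rewrite /=.
  under eq_bigr do rewrite mulr1. under [X in _ = X -> _]eq_bigr do rewrite mulr1.
  by move=> ->.
- by move=> i; rewrite xy hy key.
Qed.

Lemma sum_comb (x y : Rn R n) (s : R) :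
  \sum_l w l * ([ffun i => (1 - s) * x i + s * y i] : Rn R n) l =
  (1 - s) * \sum_l w l * x l + s * \sum_l w l * y l.
Proof.
rewrite !mulr_sumr -big_split /=; apply: eq_bigr => l _; rewrite ffunE; ring.
Qed.

Lemma expose_face : is_face (Pt t A) (convEt t F).
Proof.
split; [|split].
- move=> x hx; exists F, x; split; first exact: FA. by split => // i.
- move=> x y s [m1 [m10 [m11 hx]]] [m2 [m20 [m21 hy]]] /andP [s0 s1].
  exists (fun a => (1 - s) * m1 a + s * m2 a); split; [|split].
  + by move=> a aF; rewrite addr_ge0 // mulr_ge0 ?m10 ?m20 // subr_ge0.
  + by rewrite big_split /= -!mulr_sumr m11 m21; ring.
  + move=> i; rewrite ffunE hx hy !mulr_sumr -big_split /=; apply: eq_bigr => a _; ring.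
- move=> x y s hx hy /andP [s0 s1] hz.
  have := conv_V1 hz; rewrite sum_comb => e.
  have X1 := P_V1 hx; have Y1 := P_V1 hy.
  have p0 : 0 <= (1 - s) * (\sum_l w l * x l - 1) by apply: mulr_ge0; rewrite subr_ge0 // ltW.
  have q0 : 0 <= s * (\sum_l w l * y l - 1) by apply: mulr_ge0; rewrite ?subr_ge0 // ltW.
  have pq : (1 - s) * (\sum_l w l * x l - 1) + s * (\sum_l w l * y l - 1) = 0.
    by rewrite !mulrBr !mulr1 addrACA e; ring.
  have p00 : (1 - s) * (\sum_l w l * x l - 1) = 0 by lra.
  have q00 : s * (\sum_l w l * y l - 1) = 0 by lra.
  have s1' : 1 - s != 0 by rewrite subr_eq0 gt_eqF.
  move/eqP: p00; rewrite mulf_eq0 (negbTE s1') /= subr_eq0 => /eqP ex.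
  move/eqP: q00; rewrite mulf_eq0 (gt_eqF s0) /= subr_eq0 => /eqP ey.
  by split; apply: P_V1_conv.
Qed.
End Expose.


Lemma face_strict (R : realType) n (P G : Rn R n -> Prop) (i : 'I_n) (K : R) (y z : Rn R n) :
  is_face P G -> (forall x, G x -> x i <= K) ->
  (forall x x' : Rn R n, P x -> (forall l, x l <= x' l) -> P x') ->
  G y -> P z -> (forall l, z l <= y l) -> z i < y i -> False.
Proof.
move=> [GP [_ ext]] bnd up Gy Pz zy zi.
have yK := bnd _ Gy.
pose c := (K + 1 - y i) / (y i - z i).
have d0 : 0 < y i - z i by rewrite subr_gt0.
have c0 : 0 < c by rewrite /c divr_gt0 // subr_gt0; lra.
pose x2 : Rn R n := [ffun l => y l + c * (y l - z l)].
have Px2 : P x2 by apply: up (GP _ Gy) _ => l; rewrite ffunE lerDl mulr_ge0 ?subr_ge0 // ltW.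
pose s := (1 + c)^-1.
have s01 : 0 < s < 1.
  apply/andP; split; first by rewrite invr_gt0; lra.
  by rewrite invf_lt1; lra.
have ey : [ffun l => (1 - s) * z l + s * x2 l] = y.
  apply/ffunP => l; rewrite !ffunE /s.
  have h1c : 1 + c != 0 by rewrite gt_eqF //; lra.
  field; exact: h1c.
have := ext z x2 s Pz Px2 s01; rewrite ey => /(_ Gy) [_ /bnd].
rewrite /x2 ffunE /c divfK ?gt_eqF //; lra.
Qed.

Lemma single_le_sum (R : realType) (T : eqType) (s : seq T) (f : T -> R) j :
  uniq s -> j \in s -> (forall x, x \in s -> 0 <= f x) -> f j <= \sum_(x <- s) f x.
Proof.
move=> us js f0; rewrite (bigD1_seq j) //= lerDl big_seq_cond.
by apply: sumr_ge0 => x /andP [xs _]; apply: f0.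
Qed.

Lemma count_one (R : realType) (T : eqType) (s : seq T) j :
  uniq s -> j \in s -> \sum_(x <- s) ((j == x)%:R : R) = 1.
Proof.
move=> us js; rewrite (bigD1_seq j) //= eqxx big1 ?addr0 // => x; rewrite eq_sym => /negbTE ->; done.
Qed.

Lemma hull_no_below (R : realType) n (t : R) (A : Zn n -> Prop) (F : {fset Zn n}) :
  (0 < n)%N -> n%:R < t -> in_hull t A F -> forall b, A b -> ~ llZ b (vee F).
Proof.
move=> n0 tn [F0 [FA face]] b Ab bll.
have t1 : 1 <= t by apply: le_trans (ltW tn); rewrite ler1n.
have t0 : 0 < t by lra.
set eta := vee F.
have ex i : exists a, (a \in F) && (a i == eta i).
  by have [a aF ai] := vee_att i F0; exists a; rewrite aF ai eqxx.
pose a i := xchoose (ex i).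
have aF i : a i \in F by have /andP [] := xchooseP (ex i).
have ai i : a i i = eta i by have /andP [_ /eqP] := xchooseP (ex i).
have nR0 : (0 : R) < n%:R by rewrite ltr0n.
pose om c := (n%:R)^-1 * \sum_(i < n) ((a i == c)%:R : R).
have om0 c : 0 <= om c by rewrite mulr_ge0 ?invr_ge0 ?ler0n // sumr_ge0 // => i _; rewrite ler0n.
pose y : Rn R n := [ffun l => \sum_(c <- enum_fset F) om c * Et t c l].
have Gy : convEt t F y.
  exists om; split => //; split; last by move=> l; rewrite ffunE.
  rewrite -mulr_sumr exchange_big /=.
  under eq_bigr => i _ do rewrite (count_one _ (fset_uniq F) (aF i)).
  by rewrite sumr_const card_ord mulVf ?gt_eqF // mulr1n.
have Et0 c l : 0 <= Et t c l by rewrite ffunE exprz_ge0 // ltW.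
have yl l : Et t b l < y l.
  have h1 : om (a l) * Et t (a l) l <= y l.
    rewrite [y l]ffunE; have := single_le_sum (s:=enum_fset F) (f := fun c => om c * Et t c l) (fset_uniq F) (aF l).
    by apply => c _; rewrite mulr_ge0.
  have h2 : (n%:R)^-1 <= om (a l).
    rewrite -[X in X <= _]mulr1 ler_wpM2l ?invr_ge0 ?ler0n //.
    rewrite (bigD1 l) //= eqxx lerDl sumr_ge0 // => i _; rewrite ler0n.
  have h3 : Et t b l <= t ^ (eta l - 1).
    by rewrite ffunE ler_weXz2l // -ltzD1 subrK; apply: bll.
  have h4 : t ^ (eta l) = t ^ (eta l - 1) * t.
    by rewrite -[in LHS](subrK 1 (eta l)) expfzDr ?gt_eqF // expr1z.
  have T0 : 0 < t ^ (eta l - 1) by rewrite exprz_gt0.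
  set T := t ^ (eta l - 1) in h3 h4 T0.
  have h5 : (n%:R)^-1 * (T * t) - T = (T * (n%:R)^-1) * (t - n%:R).
    by field; rewrite gt_eqF.
  have h6 : 0 < (T * (n%:R)^-1) * (t - n%:R) by apply: mulr_gt0; [apply: mulr_gt0; rewrite ?invr_gt0 | rewrite subr_gt0].
  have h7 : (n%:R)^-1 * (T * t) <= om (a l) * Et t (a l) l.
    by rewrite ffunE ai h4 ler_wpM2r // mulr_ge0 // ltW.
  lra.
pose i0 : 'I_n := Ordinal n0.
apply: (face_strict (i := i0) (K := \sum_(c <- enum_fset F) Et t c i0) face _ _ Gy (z := Et t b)).
- move=> x [mu [mu0 [mu1 ->]]].
  rewrite big_seq [X in _ <= X]big_seq; apply: ler_sum => c cF.
  apply: ler_piMl => //; rewrite -mu1.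
  by apply: (single_le_sum (s:=enum_fset F) (f := mu) (fset_uniq F) cF).
- move=> x x' [G [y' [GA [cv le]]]] xx'; exists G, y'; split => //; split => // l.
  exact: le_trans (le l) (xx' l).
- exists [fset b]%fset, (Et t b); split; first by move=> c /fset1P ->.
  split => //; exists (fun _ => 1); split => //; split.
  + by rewrite big_seq_fset1.
  + by move=> l; rewrite big_seq_fset1 mul1r.
- by move=> l; apply: ltW.
- exact: yl.
Qed.


Section Comb.
Variables (n : nat) (A : Zn n -> Prop) (F : {fset Zn n}).
Hypotheses (gen : generic A) (F0 : F != fset0) (FA : forall a, a \in F -> A a)
  (noB : forall b, A b -> ~ llZ b (vee F)).

Lemma attains b : A b -> leZ b (vee F) -> exists i, b i = vee F i.
Proof.
move=> Ab bl; case: (boolP [exists i, b i == vee F i]) => [/existsP [i /eqP h]|h].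
  by exists i.
exfalso; apply: (noB Ab) => i; rewrite lt_neqAle bl andbT.
by move/existsPn: h => /(_ i).
Qed.

Lemma uniq_att b b' i : A b -> A b' -> leZ b (vee F) -> leZ b' (vee F) ->
  b i = vee F i -> b' i = vee F i -> b = b'.
Proof.
move=> Ab Ab' bl bl' bi bi'.
apply: (gen (eta := vee F) _ (X := [set i])) => //.
- by move=> c hc Ac; apply: (noB Ac).
- by apply/set0Pn; exists i; rewrite in_set1.
- by split => // j; rewrite in_set1 => /eqP ->.
- by split => // j; rewrite in_set1 => /eqP ->.
Qed.

Lemma same_vee (B : {fset Zn n}) : B != fset0 -> (forall b, b \in B -> A b) ->
  vee B = vee F -> B = F.
Proof.
move=> B0 BA eB; apply/fsetP => x; apply/idP/idP => xin.
- have xl : leZ x (vee F) by rewrite -eB; apply: vee_ge.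
  have [i xi] := attains (BA _ xin) xl.
  have [c cF ci] := vee_att i F0.
  have -> : x = c by apply: (@uniq_att x c i) => //; [exact: BA | exact: FA | exact: vee_ge].
  done.
- have xl : leZ x (vee F) by apply: vee_ge.
  have [i xi] := attains (FA xin) xl.
  have [c cB ci] := vee_att i B0.
  rewrite eB in ci.
  have -> : x = c by apply: (@uniq_att x c i) => //; [exact: FA | exact: BA | rewrite -eB; exact: vee_ge].
  done.
Qed.
End Comb.

Lemma scarf_below n (A : Zn n -> Prop) F : in_scarf A F ->
  forall b, A b -> leZ b (vee F) -> b \in F.
Proof.
move=> [F0 [FA sc]] b Ab bl.
have e : vee (b |` F)%fset = vee F.
  apply: vee_char.
  - by apply/fset0Pn; exists b; rewrite fsetU11.
  - by move=> c; rewrite in_fset1U => /orP [/eqP ->//|cF]; apply: vee_ge.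
  - move=> i; have [c cF ci] := vee_att i F0; exists c => //.
    by rewrite in_fset1U cF orbT.
have := sc (b |` F)%fset _ _ e; rewrite -/(_ = _).
move=> h; rewrite -h ?fsetU11 //.
- by apply/fset0Pn; exists b; rewrite fsetU11.
- by move=> c; rewrite in_fset1U => /orP [/eqP ->//|cF]; apply: FA.
Qed.

Lemma scarf_noB n (A : Zn n -> Prop) F : (0 < n)%N -> in_scarf A F ->
  forall b, A b -> ~ llZ b (vee F).
Proof.
move=> n0 sF b Ab bll.
have bF : b \in F by apply: (scarf_below sF Ab) => i; apply: ltW.
case: sF => [F0 [FA sc]].
pose i0 : 'I_n := Ordinal n0.
have [c cF ci] := vee_att i0 F0.
have cb : c != b by apply/eqP => e; move: (bll i0); rewrite -ci e ltxx.
have F'0 : (F `\ b)%fset != fset0 by apply/fset0Pn; exists c; rewrite in_fsetD1 cb cF.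
have e : vee (F `\ b)%fset = vee F.
  apply: vee_char => //.
  - by move=> d; rewrite in_fsetD1 => /andP [_ dF]; apply: vee_ge.
  - move=> i; have [d dF di] := vee_att i F0; exists d => //.
    by rewrite in_fsetD1 dF andbT; apply/eqP => db; move: (bll i); rewrite -di db ltxx.
have FA' : forall z, z \in (F `\ b)%fset -> A z by move=> z; rewrite in_fsetD1 => /andP [_ zF]; exact: FA.
have eF := sc _ F'0 FA' e.
by move: bF; rewrite -eF in_fsetD1 eqxx.
Qed.

Lemma hull_scarf (R : realType) n (t : R) (A : Zn n -> Prop) F :
  generic A -> (0 < n)%N -> n%:R < t -> in_hull t A F -> in_scarf A F.
Proof.
move=> gen n0 tn hF; have noB := hull_no_below n0 tn hF.
case: hF => [F0 [FA _]]; split => //; split => // B' B0 BA e.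
exact: (same_vee gen F0 FA noB B0 BA e).
Qed.


Section Bound.
Variables (R : realType) (n : nat) (t : R) (S : 'I_n -> 'I_n -> bool) (s : 'I_n -> R)
  (q : 'I_n -> 'I_n -> R).
Hypotheses (n0 : (0 < n)%N) (s1 : forall i, 1 <= s i) (q0 : forall i l, ~~ S i l -> 0 <= q i l)
  (q1 : forall i l, ~~ S i l -> q i l * t <= 1) (t0 : 0 < t) (tn : 2 * n%:R <= t).

Lemma offsum_bound (u : 'I_n -> R) i :
  `|\sum_(l | ~~ S i l) u l * q i l| * t <= \sum_l `|u l|.
Proof.
apply: le_trans (_ : (\sum_(l | ~~ S i l) `|u l| * q i l) * t <= _).
  apply: ler_wpM2r; first exact: ltW.
  apply: le_trans (ler_norm_sum _ _ _) _; apply: ler_sum => l hl.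
  by rewrite normrM (ger0_norm (q0 hl)).
rewrite mulr_suml [X in _ <= X](bigID (fun l => ~~ S i l)) /= -[X in X <= _]addr0.
apply: lerD; last by apply: sumr_ge0 => l _.
apply: ler_sum => l hl; rewrite -mulrA; apply: ler_piMr => //.
by apply: q1.
Qed.

Lemma bound_sol (u c : 'I_n -> R) (C : R) : 0 <= C -> (forall i, `|c i| <= C) ->
  (forall i, s i * u i + \sum_(l | ~~ S i l) u l * q i l = c i) -> forall i, `|u i| <= 2 * C.
Proof.
move=> C0 cC eq.
set m := \sum_l `|u l|.
have m0 : 0 <= m by apply: sumr_ge0.
have hi i : `|u i| * t <= C * t + m.
  have e : s i * u i = c i - \sum_(l | ~~ S i l) u l * q i l by rewrite -(eq i) addrK.
  have h1 : `|u i| <= C + `|\sum_(l | ~~ S i l) u l * q i l|.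
    apply: le_trans (_ : `|s i * u i| <= _).
      by rewrite normrM (ger0_norm (le_trans ler01 (s1 i))) ler_peMl // (le_trans ler01 (s1 i)).
    by rewrite e; apply: le_trans (ler_normB _ _) _; apply: lerD.
  have h2 : _ <= m := offsum_bound u i.
  have h3 : `|u i| * t <= (C + `|\sum_(l | ~~ S i l) u l * q i l|) * t by apply: ler_wpM2r => //; apply: ltW.
  rewrite mulrDl in h3; lra.
have hm : m * t <= n%:R * (C * t + m).
  rewrite /m mulr_suml; apply: le_trans (ler_sum _ (fun i _ => hi i)) _.
  by rewrite sumr_const card_ord mulr_natl.
have nR0 : (0 : R) < n%:R by rewrite ltr0n.
have h4 : m * (2 * n%:R) <= m * t by apply: ler_wpM2l.
have h5 : n%:R * m <= n%:R * (C * t) by lra.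
have h6 : m <= C * t by rewrite -(ler_pM2l nR0).
move=> i; have := hi i; move=> h7.
have h8 : `|u i| * t <= (2 * C) * t by lra.
by rewrite -(ler_pM2r t0).
Qed.
End Bound.


Lemma tfacts (R : realType) (n : nat) (t : R) : (0 < n)%N -> 4 * n%:R <= t ->
  [/\ 0 < t, 1 <= t & 2 * n%:R <= t].
Proof. move=> n0 tn; have h : (1 : R) <= n%:R by rewrite ler1n. split; lra. Qed.

Lemma num1 (R : realType) (s l Rv t N : R) : 1 <= s -> s <= N -> s * l + Rv = 1 ->
  `|Rv| * t <= 2 * N -> 4 * N <= t -> 0 < t -> 0 < l /\ 1 < l * t.
Proof.
move=> s1 sN e hR tN t0.
have h1 : Rv * t <= `|Rv| * t by apply: ler_wpM2r; [exact: ltW | exact: ler_norm].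
have h2 : Rv * t <= (1/2) * t by lra.
have h3 : Rv <= 1/2 by rewrite -(ler_pM2r t0).
have s0 : 0 < s by lra.
have h4 : 1/2 <= s * l by lra.
have l0 : 0 < l by rewrite -(pmulr_rgt0 _ s0); lra.
split => //.
have h5 : (1/2) * t <= (s * l) * t by apply: ler_wpM2r => //; exact: ltW.
have h6 : s * 2 <= s * (l * t) by rewrite mulrA; lra.
have := h6; rewrite ler_pM2l // => h7; lra.
Qed.

Section Weight.
Variables (R : realType) (n : nat) (t : R) (A : Zn n -> Prop) (F : {fset Zn n}).
Hypotheses (gen : generic A) (n0 : (0 < n)%N) (sF : in_scarf A F) (tn : 4 * n%:R <= t).

Variable eta : Zn n.
Hypothesis etaE : vee F = eta.
Let F0 : F != fset0. Proof. by case: sF. Qed.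
Let FA : forall a, a \in F -> A a. Proof. by case: sF => _ []. Qed.
Let noB := scarf_noB n0 sF.
Let noB' b : A b -> ~ llZ b eta. Proof. by rewrite -etaE; apply: noB. Qed.
Let nR0 : (0 : R) < n%:R. Proof. by rewrite ltr0n. Qed.
Let t0 : 0 < t. Proof. by case: (tfacts n0 tn). Qed.
Let t1 : 1 <= t. Proof. by case: (tfacts n0 tn). Qed.

Variable p : 'I_n -> Zn n.
Hypotheses (pF : forall i, p i \in F) (pi : forall i, p i i = eta i).
Let ple i : leZ (p i) eta. Proof. by rewrite -etaE; apply: vee_ge. Qed.
Let pS i l : p i l = eta l -> p l = p i.
Proof.
move=> h; have := uniq_att gen noB (FA (pF l)) (FA (pF i)); rewrite etaE; apply => //; exact: ple.
Qed.
Let pcover a : a \in F -> exists i, a = p i.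
Proof.
move=> aF; have [i ai] := attains noB (FA aF) (vee_ge aF).
have ai' : a i = eta i by rewrite ai etaE.
exists i; have := uniq_att gen noB (FA aF) (FA (pF i)) (i := i); rewrite etaE; apply.
- by rewrite -etaE; apply: vee_ge.
- exact: ple.
- exact: ai'.
- exact: pi.
Qed.

Let sS (a : Zn n) : R := \sum_(l | a l == eta l) 1.
Let qq (a : Zn n) (l : 'I_n) : R := t ^ (a l - eta l).
Let N : 'M[R]_n := \matrix_(l, i) (if l == i then sS (p i)
                     else if p i l == eta l then 0 else qq (p i) l).

Let rowN (u : 'rV[R]_n) i : (u *m N) 0 i =
  sS (p i) * u 0 i + \sum_(l | ~~ (p i l == eta l)) u 0 l * qq (p i) l.
Proof.
rewrite mxE (bigID (fun l => p i l == eta l)); congr (_ + _).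
- rewrite (bigD1 i); last by rewrite pi eqxx.
  rewrite mxE eqxx big1; first by rewrite mulrC; apply: addr0.
  move=> l /andP [hl li]; rewrite andTb in hl.
  by rewrite mxE (negbTE li) hl mulr0.
- apply: eq_bigr => l; rewrite andTb => hl; have li : l != i by apply: contraNneq hl => ->; rewrite pi.
  by rewrite mxE (negbTE li) (negbTE hl).
Qed.

Let s1 i : 1 <= sS (p i).
Proof. by rewrite /sS (bigD1 i) ?pi ?eqxx // lerDl sumr_ge0. Qed.
Let sn i : sS (p i) <= n%:R.
Proof.
rewrite /sS big_mkcond; apply: le_trans (_ : \sum_(l < n) (1 : R) <= _).
  by apply: ler_sum => l _; case: ifP.
by rewrite sumr_const card_ord.
Qed.
Let q0 i l : ~~ (p i l == eta l) -> 0 <= qq (p i) l.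
Proof. by move=> _; rewrite exprz_ge0 // ltW. Qed.
Let q1 i l : ~~ (p i l == eta l) -> qq (p i) l * t <= 1.
Proof.
move=> h; have lt : p i l < eta l by rewrite lt_neqAle h ple.
rewrite /qq -[X in _ * X]expr1z -expfzDr ?gt_eqF // -(expr0z t) ler_weXz2l //; lia.
Qed.
Let tn2 : 2 * n%:R <= t. Proof. by case: (tfacts n0 tn). Qed.

Let unitN : N \in unitmx.
Proof.
rewrite unitmxE unitfE; apply/negP => /det0P [v v0 vN].
have := bound_sol (S := fun i l => p i l == eta l) (s := fun i => sS (p i))
  (q := fun i l => qq (p i) l) n0 s1 q0 q1 t0 tn2 (u := fun l => v 0 l) (c := fun _ => 0) (lexx 0).
have c0 : forall i : 'I_n, `|(fun _ : 'I_n => (0:R)) i| <= 0 by move=> i; rewrite normr0.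
move=> /(_ c0) h.
have : forall i, `|v 0 i| <= 2 * 0.
  apply: h => i; by rewrite -rowN vN mxE.
move=> hv; move/negP: v0; apply; apply/eqP/rowP => j; rewrite mxE.
by apply/normr0_eq0/eqP; rewrite eq_le normr_ge0 andbT; have := hv j; rewrite mulr0.
Qed.

Let lam := (const_mx 1 : 'rV[R]_n) *m invmx N.
Let lamN : lam *m N = const_mx 1. Proof. exact: mulmxKV unitN _. Qed.
Let Rf (a : Zn n) := \sum_(l | ~~ (a l == eta l)) lam 0 l * qq a l.
Let lam_eq i : sS (p i) * lam 0 i + Rf (p i) = 1.
Proof. by have := rowN lam i; rewrite lamN mxE. Qed.

Let lam_bd l : `|lam 0 l| <= 2.
Proof.
have := bound_sol (S := fun i l => p i l == eta l) (s := fun i => sS (p i))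
  (q := fun i l => qq (p i) l) n0 s1 q0 q1 t0 tn2 (u := fun l => lam 0 l) (c := fun _ => 1) ler01.
have c1 : forall i : 'I_n, `|(fun _ : 'I_n => (1:R)) i| <= 1 by move=> i; rewrite normr1.
move=> /(_ c1 lam_eq l); rewrite mulr1; done.
Qed.

Let Rf_bd i : `|Rf (p i)| * t <= 2 * n%:R.
Proof.
apply: le_trans (offsum_bound (S := fun i l => p i l == eta l) (q := fun i l => qq (p i) l) q0 q1 t0 (fun l => lam 0 l) i) _.
apply: le_trans (_ : \sum_(l < n) (2 : R) <= _); first by apply: ler_sum => l _; apply: lam_bd.
by rewrite sumr_const card_ord mulr_natr.
Qed.

Let lam_pos i : 0 < lam 0 i /\ 1 < lam 0 i * t.
Proof. exact: num1 (s1 i) (sn i) (lam_eq i) (Rf_bd i) tn t0. Qed.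

Let w (l : 'I_n) : R := lam 0 l * t ^ (- eta l).
Let wpos l : 0 < w l.
Proof. by rewrite /w mulr_gt0 ?exprz_gt0 //; case: (lam_pos l). Qed.

Let Vform a : \sum_l w l * Et t a l = \sum_l lam 0 l * qq a l.
Proof.
apply: eq_bigr => l _; rewrite ffunE /w /qq expfzDr ?gt_eqF //; ring.
Qed.

Let VF a : a \in F -> \sum_l w l * Et t a l = 1.
Proof.
move=> aF; have [i ->] := pcover aF; rewrite Vform.
rewrite (bigID (fun l => p i l == eta l)) /=.
have e1 : \sum_(l | p i l == eta l) lam 0 l * qq (p i) l =
          \sum_(l | p i l == eta l) ((1 - Rf (p i)) / sS (p i)) * 1.
  apply: eq_bigr => l /eqP hl.
  have hq : qq (p i) l = 1 by rewrite /qq hl subrr expr0z.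
  have hpl := pS hl.
  have := lam_eq l; rewrite hpl => el.
  have sS0 : sS (p i) != 0 by rewrite gt_eqF // (lt_le_trans ltr01 (s1 i)).
  rewrite hq !mulr1 -el; field; exact: sS0.
rewrite e1 -mulr_sumr -/(sS (p i)).
have sS0 : sS (p i) != 0 by rewrite gt_eqF // (lt_le_trans ltr01 (s1 i)).
rewrite divfK // -/(Rf (p i)); ring.
Qed.

Let VnF b : A b -> b \notin F -> 1 < \sum_l w l * Et t b l.
Proof.
move=> Ab bF; rewrite Vform.
case: (boolP [forall j, b j <= eta j]) => [/forallP hb|/forallPn [j hj]].
  by move: bF; rewrite (scarf_below sF Ab) // etaE => j; apply: hb.
rewrite -ltNge in hj.
have [l0 lt] := lam_pos j.
apply: lt_le_trans lt _.
have hq : t <= qq b j.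
  by rewrite /qq -[X in X <= _]expr1z ler_weXz2l //; lia.
apply: le_trans (_ : lam 0 j * qq b j <= _).
  by apply: ler_wpM2l => //; exact: ltW.
rewrite (bigD1 j) //= lerDl; apply: sumr_ge0 => l _.
by rewrite mulr_ge0 ?exprz_ge0 ?ltW //; case: (lam_pos l).
Qed.

Lemma scarf_hull_sec : in_hull t A F.
Proof.
split; first exact: F0. split; first exact: FA.
exact: (expose_face wpos FA VF VnF).
Qed.
End Weight.

Unset Implicit Arguments.


Lemma zn0_eq (a b : Zn 0) : a = b.
Proof. by apply/ffunP => -[]. Qed.
Lemma rn0_eq (R : realType) (a b : Rn R 0) : a = b.
Proof. by apply/ffunP => -[]. Qed.

Lemma scarf_hull_pos (R : realType) n (t : R) (A : Zn n -> Prop) (F : {fset Zn n}) :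
  generic A -> (0 < n)%N -> 4 * n%:R <= t -> in_scarf A F -> in_hull t A F.
Proof.
move=> gen n0 tn sF.
have F0 : F != fset0 by case: sF.
have ex i : exists a, (a \in F) && (a i == vee F i).
  by have [a aF ai] := vee_att i F0; exists a; rewrite aF ai eqxx.
apply: (scarf_hull_sec gen n0 sF tn (erefl (vee F)) (p := fun i => xchoose (ex i))).
- by move=> i; have /andP [] := xchooseP (ex i).
- by move=> i; have /andP [_ /eqP] := xchooseP (ex i).
Qed.

Theorem mainTheorem3 (R : realType) (n : nat) (L A : Zn n -> Prop) :
  antichain_lattice L -> Lambda_finite L A -> generic A ->
  exists t0 : R, 1 < t0 /\
    forall t : R, t0 <= t ->
      forall F : {fset Zn n}, in_scarf A F <-> in_hull t A F.
Proof.
move=> _ _ gen; clear L.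
case: n A gen => [|n] A gen.
- exists 2; split; first lra.
  move=> t _ F; split.
  + move=> [F0 [FA _]]; split => //; split => //.
    have ex : forall u v : Rn R 0, convEt t F u -> convEt t F v by move=> u v; rewrite (rn0_eq _ u v).
    split; [|split].
    * move=> x hx; exists F, x; split => //; split => // i.
    * by move=> x y s hx _ _; apply: ex hx.
    * by move=> x y s _ _ _ hz; split; apply: ex hz.
  + move=> [F0 [FA _]]; split => //; split => // B B0 _ _.
    case/fset0Pn: F0 => a aF; case/fset0Pn: B0 => b bB.
    apply/fsetP => x; by rewrite (zn0_eq x a) aF (zn0_eq a b) bB.
- have n0 : (0 < n.+1)%N by [].
  have nR : (1 : R) <= n.+1%:R by rewrite ler1n.
  exists (4 * n.+1%:R + 1); split; first lra.
  move=> t ht F; split.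
  + apply: scarf_hull_pos => //; lra.
  + apply: hull_scarf => //; lra.
Qed.
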